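(* Let $n,m\in\mathbb{N}$, $f,g\in C[0,1]$, and $I_{n,m}(f)=\int_0^1\overline{B}_{n,m}(f;x)\,dx$. Then $$ \left|I_{n,m}(fg)-I_{n,m}(f)I_{n,m}(g)\right|\le\frac14\,\widetilde{\omega}\left(f;2\sqrt{\frac1{12}+\frac1{6m^2n}}\right)\widetilde{\omega}\left(g;2\sqrt{\frac1{12}+\frac1{6m^2n}}\right). $$
   Context: $\overline{B}_{n,m}(f;x)=B_n^{[\frac{k-1}{m},\frac km]}(f;x)$ for $x\in\left[\frac{k-1}{m},\frac km\right]$, $1\le k\le m$, where $B_n^{[a,b]}(f;x)=\frac{1}{(b-a)^n}\sum_{i=0}^n\binom ni(x-a)^i(b-x)^{n-i}f(a+i\frac{b-a}{n})$; equivalently $I_{n,m}(f)=\frac{1}{m(n+1)}\sum_{k=1}^m\sum_{i=0}^nf\left(\frac{kn-n+i}{mn}\right)$. For $f\in C[0,1]$, $\omega(f;t)=\sup\{|f(x)-f(y)|:x,y\in[0,1],|x-y|\le t\}$, and $\widetilde{\omega}(f;t)=\sup_{0\le x\le t\le y\le1,\,x\ne y}\frac{(t-x)\omega(f,y)+(y-t)\omega(f,x)}{y-x}$ for $0\le t\le1$, $\widetilde{\omega}(f;t)=\omega(f,1)$ for $t>1$ (the least concave majorant of $\omega(f;\cdot)$). *)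

(* Defs.v *)
From HB Require Import structures.
From mathcomp Require Import all_boot all_order all_algebra.
From mathcomp Require Import all_classical all_reals all_analysis.
Set Implicit Arguments. Unset Strict Implicit. Unset Printing Implicit Defensive.
Import Order.TTheory GRing.Theory Num.Theory.
Import numFieldNormedType.Exports.
Local Open Scope classical_set_scope.
Local Open Scope ring_scope.

Section Defs.
Variable R : realType.

Definition bernstein_ab (n : nat) (a b : R) (f : R -> R) (x : R) : R :=
  ((b - a) ^+ n)^-1 *
  \sum_(i < n.+1) ('C(n, i))%:R * (x - a) ^+ i * (b - x) ^+ (n - i)
                   * f (a + i%:R * (b - a) / n%:R).

(* index k-1 in {0,..,m-1} of the interval [(k-1)/m, k/m] containing x in [0,1]
   (at interior breakpoints both adjacent Bernstein pieces take the same value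
   f(k/m), so the choice there is immaterial) *)
Definition piece_index (m : nat) (x : R) : nat :=
  minn (Num.truncn (m%:R * x)) m.-1.

Definition Bbar (n m : nat) (f : R -> R) (x : R) : R :=
  let k := piece_index m x in
  bernstein_ab n (k%:R / m%:R) (k.+1%:R / m%:R) f x.

Definition Inm (n m : nat) (f : R -> R) : R :=
  Rintegral lebesgue_measure `[0, 1] (Bbar n m f).

Definition omega (f : R -> R) (t : R) : R :=
  sup [set r : R | exists x y : R, [/\ x \in `[0, 1], y \in `[0, 1],
                       `|x - y| <= t & r = `|f x - f y| ] ].

(* least concave majorant of omega f *)
Definition omega_tilde (f : R -> R) (t : R) : R :=
  if t <= 1 then
    sup [set r : R | exists x y : R, [/\ (0 <= x) && (x <= t), (t <= y) && (y <= 1), x != y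
           & r = ((t - x) * omega f y + (y - t) * omega f x) / (y - x)] ]
  else omega f 1.

End Defs.

(* Main.v *)
Require Import Defs.
From HB Require Import structures.
From mathcomp Require Import all_boot all_order all_algebra.
From mathcomp Require Import all_classical all_reals all_analysis.
From mathcomp Require Import ring lra.
Import Order.TTheory GRing.Theory Num.Theory.
Import numFieldNormedType.Exports.
Local Open Scope classical_set_scope.
Local Open Scope ring_scope.


Section Disc.
Variable (R : rcfType) (T : finType).
Hypothesis T0 : (0 < #|T|)%N.

Definition Ex (F : T -> R) := (\sum_t F t) / #|T|%:R.
Definition Cv (F G : T -> R) := Ex (fun t => F t * G t) - Ex F * Ex G.

Lemma N0 : (#|T|%:R : R) != 0.
Proof. by rewrite pnatr_eq0 -lt0n. Qed.

Lemma Ex_lin a b F G : Ex (fun t => a * F t + b * G t) = a * Ex F + b * Ex G.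
Proof.
rewrite /Ex big_split /= -!mulr_sumr; field; exact: N0.
Qed.

Lemma Ex_cst c : Ex (fun _ => c) = c.
Proof. rewrite /Ex sumr_const -mulr_natr; field; exact: N0. Qed.

Lemma Ex_le F G : (forall t, F t <= G t) -> Ex F <= Ex G.
Proof.
move=> H; rewrite /Ex ler_pM2r ?invr_gt0 ?ltr0n //; exact: ler_sum.
Qed.

Lemma Ex_ext F G : F =1 G -> Ex F = Ex G.
Proof. by move=> H; rewrite /Ex; under eq_bigr do rewrite H. Qed.

Lemma Cv_dbl F G : Cv F G =
  (\sum_s \sum_t (F s - F t) * (G s - G t)) / (2 * #|T|%:R ^+ 2).
Proof.
have inner : forall s, \sum_t (F s - F t) * (G s - G t) =
    #|T|%:R * (F s * G s) - F s * (\sum_t G t) - G s * (\sum_t F t) + \sum_t F t * G t.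
  move=> s.
  transitivity (\sum_t (F s * G s + ((- F s) * G t + ((- G s) * F t + F t * G t)))).
    by apply: eq_bigr => t _; ring.
  rewrite !big_split /= sumr_const -!big_distrr /= -mulr_natl; ring.
have E : \sum_s \sum_t (F s - F t) * (G s - G t) =
   2 * #|T|%:R * (\sum_t F t * G t) - 2 * (\sum_t F t) * (\sum_t G t).
  under eq_bigr do rewrite inner.
  transitivity (\sum_s (#|T|%:R * (F s * G s) + ((- (\sum_t G t)) * F s +
      ((- (\sum_t F t)) * G s + \sum_t F t * G t)))).
    by apply: eq_bigr => t _; ring.
  rewrite !big_split /= sumr_const -!big_distrr /= -mulr_natl; ring.
rewrite E /Cv /Ex; field; exact: N0.
Qed.


Lemma Cv_ge0 F : 0 <= Cv F F.
Proof.
rewrite Cv_dbl divr_ge0 //.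
all: try by rewrite mulr_ge0 // exprn_ge0.
by apply: sumr_ge0 => s _; apply: sumr_ge0 => t _; rewrite -expr2 sqr_ge0.
Qed.

Lemma Cv_sym F G : Cv F G = Cv G F.
Proof.
rewrite /Cv mulrC; congr (_ - _); apply: Ex_ext => t; exact: mulrC.
Qed.

Lemma Cv_quad F G s : Cv (fun t => F t + s * G t) (fun t => F t + s * G t) =
  Cv F F + 2 * s * Cv F G + s ^+ 2 * Cv G G.
Proof.
rewrite /Cv.
have -> : Ex (fun t => (F t + s * G t) * (F t + s * G t)) =
   Ex (fun t => 1 * (F t * F t) + 1 * (2 * s * (F t * G t) + s ^+ 2 * (G t * G t))).
  by apply: Ex_ext => t; ring.
rewrite Ex_lin Ex_lin.
have -> : Ex (fun t => F t + s * G t) = Ex (fun t => 1 * F t + s * G t).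
  by apply: Ex_ext => t; ring.
rewrite Ex_lin; ring.
Qed.

Lemma quad_disc (A B C : R) : 0 <= C ->
  (forall s, 0 <= A + 2 * s * B + s ^+ 2 * C) -> B ^+ 2 <= A * C.
Proof.
move=> C0 H.
have [Ce|Cp] := eqVneq C 0.
  rewrite Ce in H *.
  have [->|B0] := eqVneq B 0; first by rewrite expr0n /= mulr0.
  have := H (- (A + 1) / (2 * B)).
  have -> : A + 2 * (- (A + 1) / (2 * B)) * B + (- (A + 1) / (2 * B)) ^+ 2 * 0 = -1.
    by field; rewrite B0.
  by rewrite ler0N1.
have Cpos : 0 < C by rewrite lt_def Cp C0.
have := H (- B / C).
have -> : A + 2 * (- B / C) * B + (- B / C) ^+ 2 * C = (A * C - B ^+ 2) / C.
  by field.
rewrite pmulr_lge0 ?invr_gt0 // subr_ge0 //.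
Qed.

Lemma Cv_CS F G : Cv F G ^+ 2 <= Cv F F * Cv G G.
Proof.
apply: quad_disc; first exact: Cv_ge0.
move=> s; rewrite -Cv_quad; exact: Cv_ge0.
Qed.

Lemma sqr_le_abs (c r : R) : 0 <= r -> c ^+ 2 <= r ^+ 2 -> `|c| <= r.
Proof.
move=> r0 H; by rewrite -(ger0_norm r0) -ler_sqr ?nnegrE ?normr_ge0 // !real_normK ?num_real.
Qed.

Lemma Cv_addl F G H : Cv (fun t => F t + G t) H = Cv F H + Cv G H.
Proof.
rewrite /Cv.
have -> : Ex (fun t => (F t + G t) * H t) = Ex (fun t => 1 * (F t * H t) + 1 * (G t * H t)).
  by apply: Ex_ext => t; ring.
have -> : Ex (fun t => F t + G t) = Ex (fun t => 1 * F t + 1 * G t).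
  by apply: Ex_ext => t; ring.
rewrite !Ex_lin; ring.
Qed.

Lemma Cv_le_Ex2 F : Cv F F <= Ex (fun t => F t * F t).
Proof. by rewrite /Cv lerBlDr lerDl -expr2 sqr_ge0. Qed.

Lemma Cv_lip (h x : T -> R) l : (forall s t, `|h s - h t| <= l * `|x s - x t|) ->
  0 <= l -> Cv h h <= l ^+ 2 * Cv x x.
Proof.
move=> Hl l0; rewrite !Cv_dbl; set Y := (2 * _ ^+ 2); rewrite mulrA ler_pM2r ?invr_gt0 ?mulr_gt0 ?exprn_gt0 ?ltr0n //.
rewrite big_distrr /=; apply: ler_sum => s _; rewrite big_distrr /=.
apply: ler_sum => t _; rewrite -!expr2 -exprMn.
rewrite -[X in X <= _]real_normK ?num_real // -[X in _ <= X]real_normK ?num_real //.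
rewrite ler_sqr ?nnegrE ?normr_ge0 // normrM (ger0_norm l0); exact: Hl.
Qed.

Section Main.
Variables (x F : T -> R) (a l : R).
Hypotheses (a0 : 0 <= a) (l0 : 0 <= l)
  (HF : forall s t, `|F s - F t| <= 2 * a + l * `|x s - x t|).

Lemma Var_bound : Cv F F <= (a + l * Num.sqrt (Cv x x)) ^+ 2.
Proof.
have [t0 _] : exists t0 : T, true.
  by move/card_gt0P: T0 => [t0 _]; exists t0.
pose mn t := \big[Order.min/(F t0 + l * `|x t - x t0|)]_s (F s + l * `|x t - x s|).
pose h t := a + mn t.
have h_le t : h t <= a + F t.
  rewrite /h lerD2l; apply: le_trans (bigmin_le _ t _) _.
  by rewrite subrr normr0 mulr0 addr0.
have h_ge t : F t - a <= h t.
  rewrite /h -lerBlDl; apply: le_bigmin => [|s _].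
    have := HF t t0; rewrite ler_norml => /andP[_]; lra.
  have := HF t s; rewrite ler_norml => /andP[_]; lra.
have h_lip1 t t' : h t - l * `|x t - x t'| <= h t'.
  rewrite /h; suff : mn t - l * `|x t - x t'| <= mn t' by lra.
  have key s : mn t - l * `|x t - x t'| <= F s + l * `|x t' - x s|.
    apply: le_trans (_ : F s + l * `|x t - x s| - l * `|x t - x t'| <= _).
      by rewrite lerD2r; exact: bigmin_le.
    have : `|x t - x s| <= `|x t - x t'| + `|x t' - x s|.
      by rewrite (le_trans _ (ler_normD _ _)) // addrA subrK.
    move=> tri; have := ler_wpM2l l0 tri; lra.
  by apply: le_bigmin => [|s _]; exact: key.
have h_lip s t : `|h s - h t| <= l * `|x s - x t|.
  rewrite ler_norml; apply/andP; split.
    have := h_lip1 t s; rewrite distrC; lra.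
  have := h_lip1 s t; lra.
pose u t := F t - h t.
have u_b t : u t * u t <= a ^+ 2.
  rewrite -expr2 -[X in X <= _]real_normK ?num_real // ler_sqr ?nnegrE ?normr_ge0 //.
  by rewrite ler_norml; apply/andP; split; have := h_le t; have := h_ge t; rewrite /u; lra.
have Huu : Cv u u <= a ^+ 2.
  apply: le_trans (Cv_le_Ex2 _) _; rewrite -(Ex_cst (a ^+ 2)); exact: Ex_le.
have Hhh : Cv h h <= l ^+ 2 * Cv x x by apply: Cv_lip.
set D := Num.sqrt (Cv x x).
have D0 : 0 <= D by exact: sqrtr_ge0.
have DD : D ^+ 2 = Cv x x by rewrite sqr_sqrtr // Cv_ge0.
have Huh : Cv u h <= a * l * D.
  apply: le_trans (ler_norm _) _; apply: sqr_le_abs.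
    by rewrite !mulr_ge0.
  apply: le_trans (Cv_CS _ _) _.
  rewrite -mulrA [X in _ <= X]exprMn [(l * D) ^+ 2]exprMn DD.
  by apply: ler_pM; rewrite ?Cv_ge0.
have -> : Cv F F = Cv (fun t => u t + 1 * h t) (fun t => u t + 1 * h t).
  rewrite /Cv; congr (_ - _ * _).
  - by apply: Ex_ext => t; rewrite /u mul1r subrK.
  - by apply: Ex_ext => t; rewrite /u mul1r subrK.
  - by apply: Ex_ext => t; rewrite /u mul1r subrK.
rewrite Cv_quad.
have : 0 <= Cv x x by exact: Cv_ge0.
rewrite -DD => _.
have := ler_wpM2l (sqr_ge0 l) (le_refl (D ^+ 2)).
rewrite DD in Hhh *; nra.
Qed.
End Main.

Lemma cov_bound (x F G : T -> R) a l b u :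
  0 <= a -> 0 <= l -> 0 <= b -> 0 <= u ->
  (forall s t, `|F s - F t| <= 2 * a + l * `|x s - x t|) ->
  (forall s t, `|G s - G t| <= 2 * b + u * `|x s - x t|) ->
  `|Cv F G| <= (a + l * Num.sqrt (Cv x x)) * (b + u * Num.sqrt (Cv x x)).
Proof.
move=> a0 l0 b0 u0 HF HG.
have D0 : 0 <= Num.sqrt (Cv x x) by exact: sqrtr_ge0.
apply: sqr_le_abs; first by rewrite mulr_ge0 // addr_ge0 // mulr_ge0.
apply: le_trans (Cv_CS _ _) _; rewrite exprMn.
apply: ler_pM; rewrite ?Cv_ge0 //; exact: Var_bound.
Qed.

End Disc.
Arguments Ex {R T}.
Arguments Cv {R T}.


Section Om.
Variables (R : realType) (f : R -> R) (M : R).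
Hypothesis HM : forall x, x \in `[0, 1] -> `|f x| <= M.

Lemma om_ub x y u : x \in `[0, 1] -> y \in `[0, 1] -> `|x - y| <= u ->
  `|f x - f y| <= omega f u.
Proof.
move=> hx hy hu; apply: ub_le_sup; last by exists x, y.
exists (M + M) => r [x' [y' [hx' hy' _ ->]]].
apply: le_trans (ler_normB _ _) _; apply: lerD; exact: HM.
Qed.

Lemma in01_0 : (0 : R) \in `[0, 1].
Proof. by rewrite in_itv /= lexx ler01. Qed.

Lemma om_ge0 u : 0 <= u -> 0 <= omega f u.
Proof.
move=> u0; apply: le_trans (normr_ge0 (f 0 - f 0)) (om_ub 0 0 u in01_0 in01_0 _).
by rewrite subrr normr0.
Qed.

Lemma om_le u : 0 <= u -> omega f u <= M + M.
Proof.
move=> u0; apply: ge_sup.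
  by exists `|f 0 - f 0|, 0, 0; split => //; rewrite ?in01_0 // subrr normr0.
move=> r [x' [y' [hx' hy' _ ->]]].
apply: le_trans (ler_normB _ _) _; apply: lerD; exact: HM.
Qed.

Lemma om_mono u v : 0 <= u -> u <= v -> omega f u <= omega f v.
Proof.
move=> u0 uv; apply: ge_sup.
  by exists `|f 0 - f 0|, 0, 0; split => //; rewrite ?in01_0 // subrr normr0.
move=> r [x' [y' [hx' hy' hu ->]]].
apply: om_ub => //; exact: le_trans uv.
Qed.

Lemma omt_ge T x y : 0 < T -> T <= 1 -> 0 <= x -> x <= T -> T <= y -> y <= 1 -> x != y ->
  ((T - x) * omega f y + (y - T) * omega f x) / (y - x) <= omega_tilde f T.
Proof.
move=> T0 T1 x0 xT Ty y1 xy.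
rewrite /omega_tilde T1; apply: ub_le_sup; last first.
  by exists x, y; split => //; apply/andP; split.
exists (M + M) => r [x' [y' [/andP[x0' xT'] /andP[Ty' y1'] xy' ->]]].
have yx : 0 < y' - x'.
  rewrite subr_gt0 lt_def eq_sym xy' /=; exact: le_trans Ty'.
rewrite ler_pdivrMr //.
have h1 := @om_le y' (le_trans (ltW T0) Ty').
have h2 := @om_le x' x0'.
have := ler_wpM2l (_ : 0 <= T - x') h1; rewrite subr_ge0 => /(_ xT') h3.
have := ler_wpM2l (_ : 0 <= y' - T) h2; rewrite subr_ge0 => /(_ Ty') h4.
lra.
Qed.

Lemma omt_geom T : 0 < T -> T <= 1 -> omega f T <= omega_tilde f T.
Proof.
move=> T0 T1; apply: le_trans (@omt_ge T 0 T T0 T1 (lexx 0) (ltW T0) (lexx T) T1 _); last first.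
  by rewrite eq_sym gt_eqF.
by rewrite subrr mul0r addr0 subr0 mulrC mulKf // gt_eqF.
Qed.


Lemma div_le (a b c e : R) : 0 < b -> 0 < e -> a * e <= c * b -> a / b <= c / e.
Proof. by move=> b0 e0 H; rewrite ler_pdivrMr // mulrAC ler_pdivlMr. Qed.

Lemma K_choice (T : finType) (x : T -> R) (Tt : R) :
  (forall t, x t \in `[0, 1]) -> 0 < Tt -> Tt <= 1 ->
  exists a l, [/\ 0 <= a, 0 <= l,
    (forall s t, `|f (x s) - f (x t)| <= 2 * a + l * `|x s - x t|)
    & a + l * (Tt / 2) = omega_tilde f Tt / 2].
Proof.
move=> hx T0 T1.
set W := omega_tilde f Tt.
pose d (p : T * T) := `|x p.1 - x p.2|.
pose q p := (W - omega f (d p)) / (Tt - d p).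
pose q0 := (W - omega f 0) / Tt.
pose l := \big[Order.min/q0]_(p | d p < Tt) q p.
have d0 p : 0 <= d p by exact: normr_ge0.
have d1 p : d p <= 1.
  rewrite /d ler_norml; have := hx p.1; have := hx p.2; rewrite !in_itv /=.
  move=> /andP[? ?] /andP[? ?]; apply/andP; split; lra.
have WgeT : omega f Tt <= W by exact: omt_geom.
have Wge u : 0 <= u -> u <= Tt -> omega f u <= W.
  by move=> u0 uT; apply: le_trans WgeT; exact: om_mono.
have om0 := @om_ge0 0 (lexx 0).
have q00 : 0 <= q0.
  by rewrite /q0 divr_ge0 ?subr_ge0 ?(ltW T0) // Wge // ltW.
have l0 : 0 <= l.
  apply: le_bigmin => // p dp; rewrite /q divr_ge0 // subr_ge0 ?Wge //; exact: ltW.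
have lq0 : l <= q0 by exact: bigmin_le_id.
have lq p : d p < Tt -> l <= q p by move=> dp; exact: bigmin_le_cond.
have lT : l * Tt <= W - omega f 0 by rewrite -ler_pdivlMr.
exists ((W - l * Tt) / 2), l; split.
- by rewrite divr_ge0 //; lra.
- exact: l0.
- move=> s t.
  have H1 : `|f (x s) - f (x t)| <= omega f (d (s, t)) by exact: om_ub.
  apply: le_trans H1 _.
  have [dlt|dge] := ltP (d (s, t)) Tt.
    have := lq _ dlt; rewrite /q ler_pdivlMr ?subr_gt0 // => H.
    rewrite /d /= in H *; nra.
  have [deq|dgt] := eqVneq (d (s, t)) Tt.
    rewrite /d /= in deq *; rewrite deq; lra.
  have dgt' : Tt < d (s, t) by rewrite lt_def dgt dge.
  have : (omega f (d (s, t)) - W) / (d (s, t) - Tt) <= l.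
    apply: le_bigmin => [|p dp].
      apply: div_le; rewrite ?subr_gt0 //.
      have nz : (0:R) != d (s, t) by rewrite lt_eqF // (lt_trans T0 dgt').
      have := @omt_ge Tt 0 (d (s, t)) T0 T1 (lexx 0) (ltW T0) (ltW dgt') (d1 _) nz.
      rewrite -/W !subr0 ler_pdivrMr => [H|]; [nra | exact: lt_trans T0 dgt'].
    apply: div_le; rewrite ?subr_gt0 //.
    have nz : d p != d (s, t) by rewrite lt_eqF // (lt_trans dp dgt').
    have := @omt_ge Tt (d p) (d (s, t)) T0 T1 (d0 _) (ltW dp) (ltW dgt') (d1 _) nz.
    rewrite -/W ler_pdivrMr => [H|]; [nra | by rewrite subr_gt0 (lt_trans dp dgt')].
  rewrite ler_pdivrMr ?subr_gt0 // => H.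
  rewrite /d /= in H *; nra.
- by rewrite /W; field.
Qed.

End Om.


Section Integ.
Variable R : realType.
Local Notation mu := (@lebesgue_measure R).

Lemma affine_derive (a c : R) : (fun u : R => a + c * u)^`()%classic = cst c.
Proof.
have -> : (fun u : R => a + c * u) = horner (a%:P + c *: 'X).
  by apply/funext => u; rewrite !hornerE.
rewrite -derivE derivD derivC derivZ derivX add0r.
by apply/funext => u; rewrite !hornerE.
Qed.

Lemma beta_ab (a b : R) (i k : nat) : a < b ->
  \int[mu]_(x in `[a, b]) ((x - a) ^+ i * (b - x) ^+ k) =
  (b - a) ^+ (i + k).+1 * ((i`! * k`!)%:R / (i + k).+1`!%:R).
Proof.
move=> ab.
pose F := fun u : R => a + (b - a) * u.
pose G := fun x : R => (x - a) ^+ i * (b - x) ^+ k.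
have F0 : F 0 = a by rewrite /F mulr0 addr0.
have F1 : F 1 = b by rewrite /F mulr1 addrC subrK.
have dF : F^`()%classic = cst (b - a) by exact: affine_derive.
have Fp : F = horner (a%:P + (b - a) *: 'X).
  by apply/funext => u; rewrite !hornerE.
have Gp : G = horner (('X - a%:P) ^+ i * (b%:P - 'X) ^+ k).
  by apply/funext => u; rewrite !hornerE.
have := @integration_by_substitution_increasing R F G 0 1 ler01.
rewrite F0 F1 dF => H.
have H' : (\int[mu]_(x in `[a, b]) (G x)%:E =
     \int[mu]_(x in `[0%R, 1%R]) (((G \o F) * cst (b - a)) x)%:E)%E.
  apply: H.
  - move=> x y _ _ xy; rewrite /F ltrD2l ltr_pM2l // subr_gt0 //.
  - by move=> x _; exact: cst_continuous.
  - exact: is_cvg_cst.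
  - exact: is_cvg_cst.
  - rewrite Fp; split.
    + by move=> x _; exact: derivable_horner.
    + exact/cvg_at_right_filter/continuous_horner.
    + exact/cvg_at_left_filter/continuous_horner.
  - by rewrite Gp; apply: continuous_subspaceT => x; exact: continuous_horner.
rewrite /Rintegral H'.
transitivity (\int[mu]_(u in `[0, 1]) ((b - a) ^+ (i + k).+1 * XMonemX i k u)).
  apply: eq_Rintegral => u _.
  rewrite /XMonemX /unstable.onem.
  rewrite -[LHS]/((a + (b - a) * u - a) ^+ i * (b - (a + (b - a) * u)) ^+ k * (b - a)).
  have -> : a + (b - a) * u - a = (b - a) * u by ring.
  have -> : b - (a + (b - a) * u) = (b - a) * (1 - u) by ring.
  by rewrite !exprMn -addSn exprD exprS; ring.
rewrite RintegralZl //; last exact: integrable_XMonemX.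
congr (_ * _).
rewrite Rintegral_mkcond.
exact: (@beta_fun_fact R i k).
Qed.


Lemma Rintegral_sumo (D : set R) (N : nat) (h : 'I_N -> R -> R) : measurable D ->
  (forall i, mu.-integrable D (EFin \o h i)) ->
  \int[mu]_(x in D) (\sum_(i < N) h i x) = \sum_(i < N) \int[mu]_(x in D) h i x.
Proof.
move=> mD hi; rewrite /Rintegral.
under eq_integral do rewrite -sumEFin.
rewrite (@integral_sum _ _ _ mu D mD _ (fun i x => (h i x)%:E)) //.
rewrite -EFin_sum_fine // => i _; apply: integrable_fin_num; [exact: mD|exact: hi].
Qed.

Lemma cont_term (c a b : R) i j :
  continuous (fun x : R => c * ((x - a) ^+ i * (b - x) ^+ j)).
Proof.
have -> : (fun x : R => c * ((x - a) ^+ i * (b - x) ^+ j)) =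
    horner (c%:P * (('X - a%:P) ^+ i * (b%:P - 'X) ^+ j)).
  by apply/funext => x; rewrite !hornerE.
exact: continuous_horner.
Qed.

Lemma int_term (c a b : R) i j : mu.-integrable `[a, b]
  (EFin \o (fun x : R => c * ((x - a) ^+ i * (b - x) ^+ j))).
Proof.
apply: continuous_compact_integrable; first exact: segment_compact.
by apply: continuous_subspaceT => x; exact: cont_term.
Qed.

Lemma bern_int (a b : R) n F : a < b ->
  \int[mu]_(x in `[a, b]) bernstein_ab n a b F x =
  (b - a) / n.+1%:R * \sum_(i < n.+1) F (a + i%:R * (b - a) / n%:R).
Proof.
move=> ab; rewrite /bernstein_ab.
pose c (i : 'I_n.+1) := ((b - a) ^+ n)^-1 * 'C(n, i)%:R * F (a + i%:R * (b - a) / n%:R).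
transitivity (\int[mu]_(x in `[a, b]) (\sum_(i < n.+1)
    c i * ((x - a) ^+ i * (b - x) ^+ (n - i)))).
  apply: eq_Rintegral => x _; rewrite mulr_sumr; apply: eq_bigr => i _.
  by rewrite /c; ring.
rewrite Rintegral_sumo //; last by move=> i; exact: int_term.
rewrite mulr_sumr; apply: eq_bigr => i _.
have -> : \int[mu]_(x in `[a, b]) (c i * ((x - a) ^+ i * (b - x) ^+ (n - i))) =
   c i * \int[mu]_(x in `[a, b]) ((x - a) ^+ i * (b - x) ^+ (n - i)).
  rewrite RintegralZl //.
  have := @int_term 1 a b i (n - i).
  by apply: eq_integrable => // x _ /=; rewrite mul1r.
rewrite beta_ab // subnKC; last by rewrite -ltnS.
have hb := bin_fact (_ : (i <= n)%N); rewrite -ltnS in hb.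
have {hb} := f_equal (fun k => k%:R : R) (hb (ltn_ord i)).
rewrite natrM => hb.
rewrite /c factS (natrM _ n.+1) -hb.
have ba : b - a != 0 by rewrite subr_eq0 gt_eqF.
have f1 : ((n - i)`!%:R : R) != 0 by rewrite pnatr_eq0 -lt0n fact_gt0.
have f2 : (i`!%:R : R) != 0 by rewrite pnatr_eq0 -lt0n fact_gt0.
have n1 : (1 + n%:R : R) != 0 by rewrite addrC natr1 pnatr_eq0.
have C0 : ('C(n, i)%:R : R) != 0 by rewrite pnatr_eq0 -lt0n bin_gt0 -ltnS.
rewrite exprS; field.
by rewrite n1 f1 f2 C0 expf_neq0.
Qed.


Lemma integrableU (A B : set R) (g : R -> \bar R) : measurable A -> measurable B ->
  [disjoint A & B] -> mu.-integrable A g -> mu.-integrable B g ->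
  mu.-integrable (A `|` B) g.
Proof.
move=> mA mB AB iA iB.
have mAB : measurable (A `|` B) by exact: measurableU.
rewrite -[A `|` B]setTI; apply/integrable_restrict => //=.
have -> : g \_ (A `|` B) = (g \_ A) \+ (g \_ B).
  apply/funext => x; rewrite /= !patchE.
  have [xA|xA] := boolP (x \in A).
    have xB : x \notin B.
      apply/negP => /set_mem xB; move/disj_setPS: AB => /(_ x) H.
      by have := H (conj (set_mem xA) xB).
    by rewrite (negbTE xB) mem_set ?adde0 //; left; exact: set_mem.
  have [xB|xB] := boolP (x \in B).
    by rewrite mem_set ?add0e //; right; exact: set_mem.
  rewrite adde0; case: ifPn => // /set_mem [] ?.
    by move: xA; rewrite mem_set.
  by move: xB; rewrite mem_set.
apply: integrableD => //; apply/integrable_restrict => //=; rewrite setTI //.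
Qed.


Lemma bern_cont n (a b : R) F : continuous (bernstein_ab n a b F).
Proof.
have -> : bernstein_ab n a b F = horner (((b - a) ^+ n)^-1 *:
   \sum_(i < n.+1) ('C(n, i)%:R * F (a + i%:R * (b - a) / n%:R)) *:
       (('X - a%:P) ^+ i * (b%:P - 'X) ^+ (n - i))).
  apply/funext => x; rewrite /bernstein_ab hornerZ horner_sum; congr (_ * _).
  apply: eq_bigr => i _; rewrite hornerZ hornerM !horner_exp !hornerE.
  rewrite -[RHS]/(('C(n, i)%:R * F (a + i%:R * (b - a) / n%:R)) * (x - a) ^+ i * (b - x) ^+ (n - i)); ring.
exact: continuous_horner.
Qed.

Lemma bern_left n (a b : R) F : a != b -> bernstein_ab n a b F a = F a.
Proof.
move=> ab; rewrite /bernstein_ab big_ord_recl big1 ?addr0; last first.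
  by move=> i _; rewrite subrr expr0n /= mulr0 !mul0r.
rewrite /= bin0 subn0 subrr !expr0 !mul1r mul0r mul0r addr0.
by rewrite mulrA mulVf ?mul1r // expf_neq0 // subr_eq0 eq_sym.
Qed.

Lemma bern_right n (a b : R) F : a != b -> (0 < n)%N -> bernstein_ab n a b F b = F b.
Proof.
move=> ab n0; rewrite /bernstein_ab big_ord_recr big1 ?add0r; last first.
  move=> i _; rewrite subrr expr0n /=.
  by have := ltn_ord i; rewrite -subn_gt0 => /lt0n_neq0 /negbTE ->; rewrite !mulr0 mul0r.
rewrite /= binn subnn subrr !expr0 mulr1 mul1r.
have -> : a + n%:R * (b - a) / n%:R = b.
  by rewrite mulrAC divff ?mul1r ?pnatr_eq0 -?lt0n // addrC subrK.
by rewrite add0r mulrA mulVf ?mul1r // expf_neq0 // subr_eq0 eq_sym.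
Qed.

Lemma Bbar_piece n m (F : R -> R) k (x : R) : (0 < n)%N -> (k < m)%N ->
  x \in `[k%:R / m%:R, k.+1%:R / m%:R] ->
  Bbar n m F x = bernstein_ab n (k%:R / m%:R) (k.+1%:R / m%:R) F x.
Proof.
move=> n0 km; rewrite in_itv /= => /andP[kx xk].
have m0 : (0 : R) < m%:R by rewrite ltr0n (leq_ltn_trans (leq0n k) km).
have k1 : (k%:R : R) <= m%:R * x by rewrite -ler_pdivrMl // mulrC.
have k2 : m%:R * x <= k.+1%:R by rewrite -ler_pdivlMl // mulrC.
have neq j : (j%:R / m%:R : R) != j.+1%:R / m%:R.
  by rewrite lt_eqF // ltr_pM2r ?invr_gt0 // ltr_nat.
rewrite /Bbar /piece_index.
have [lt|eq] := ltP (m%:R * x) k.+1%:R.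
  rewrite (@truncn_def _ _ k); last by rewrite k1 lt.
  by rewrite (minn_idPl _) // -ltnS prednK // (leq_ltn_trans _ km).
have e : m%:R * x = k.+1%:R by apply/eqP; rewrite eq_le k2 eq.
rewrite e natrK.
have xe : x = k.+1%:R / m%:R by rewrite -e mulrC mulKf ?gt_eqF.
have [km1|km1] := ltnP k.+1 m.
  rewrite (minn_idPl _); last by rewrite -ltnS prednK // (leq_ltn_trans _ km).
  by rewrite xe bern_left // bern_right.
have -> : minn k.+1 m.-1 = k.
  have mk : m = k.+1 by apply/eqP; rewrite eqn_leq km km1.
  by rewrite mk /= minnC (minn_idPl _).
by [].
Qed.


Definition Pk n m (F : R -> R) (k : nat) : R :=
  (k.+1%:R / m%:R - k%:R / m%:R) / n.+1%:R *
  \sum_(i < n.+1) F (k%:R / m%:R + i%:R * (k.+1%:R / m%:R - k%:R / m%:R) / n%:R).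

Lemma piece_int n m (F : R -> R) k : (0 < n)%N -> (k < m)%N ->
  mu.-integrable `[k%:R / m%:R, k.+1%:R / m%:R] (EFin \o Bbar n m F) /\
  \int[mu]_(x in `[k%:R / m%:R, k.+1%:R / m%:R]) Bbar n m F x = Pk n m F k.
Proof.
move=> n0 km.
have m0 : (0 : R) < m%:R by rewrite ltr0n (leq_ltn_trans (leq0n k) km).
have ab : (k%:R / m%:R : R) < k.+1%:R / m%:R by rewrite ltr_pM2r ?invr_gt0 // ltr_nat.
have eqB : {in `[k%:R / m%:R, k.+1%:R / m%:R],
    bernstein_ab n (k%:R / m%:R) (k.+1%:R / m%:R) F =1 Bbar n m F}.
  by move=> x hx; rewrite (@Bbar_piece n m F k x n0 km hx).
split.
  apply: (@eq_integrable _ _ _ mu _ _ (EFin \o bernstein_ab n (k%:R / m%:R) (k.+1%:R / m%:R) F)) => //.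
    by move=> x hx /=; rewrite eqB //; move: hx; rewrite inE.
  apply: continuous_compact_integrable; first exact: segment_compact.
  by apply: continuous_subspaceT => x; exact: bern_cont.
rewrite /Pk -(@bern_int _ _ n F ab); apply: eq_Rintegral => x hx; rewrite eqB //; by move: hx; rewrite inE; apply.
Qed.


Lemma upto n m (F : R -> R) j : (0 < n)%N -> (j < m)%N ->
  mu.-integrable `[0, j.+1%:R / m%:R] (EFin \o Bbar n m F) /\
  \int[mu]_(x in `[0, j.+1%:R / m%:R]) Bbar n m F x = \sum_(k < j.+1) Pk n m F k.
Proof.
move=> n0; elim: j => [|j IH] jm.
  have [h1 h2] := @piece_int n m F 0 n0 jm.
  have z : (0%:R / m%:R : R) = 0 by rewrite mul0r.
  rewrite z in h1 h2; split => //; by rewrite big_ord1.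
have m0 : (0 : R) < m%:R by rewrite ltr0n (leq_ltn_trans (leq0n _) jm).
have [i1 e1] := IH (ltnW jm).
have [i2 e2] := @piece_int n m F j.+1 n0 jm.
set c := (j.+1%:R / m%:R : R) in i1 e1 i2 e2 *.
set d := (j.+2%:R / m%:R : R) in i2 e2 *.
have c0 : 0 <= c by rewrite /c divr_ge0.
have cd : c < d by rewrite /c /d ltr_pM2r ?invr_gt0 // ltr_nat.
have U : `[0, d]%classic = (`[0, c] `|` `]c, d])%classic.
  by rewrite (@itv_bndbnd_setU _ _ (BLeft 0) (BRight c) (BRight d)) // bnd_simp ltW.
have dis : [disjoint `[0, c]%classic & `]c, d]%classic].
  apply/disj_setPS => x [h1 h2]; move: h1 h2; rewrite /= !in_itv /= => /andP[_ a] /andP[b _].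
  by have := lt_le_trans b a; rewrite ltxx.
have i3 : mu.-integrable `]c, d] (EFin \o Bbar n m F).
  apply: integrableS i2 => //; exact: subset_itv_oc_cc.
have i4 : mu.-integrable `[0, d] (EFin \o Bbar n m F).
  by rewrite U; apply: integrableU.
split => //.
rewrite U Rintegral_setU //; last by rewrite -U.
rewrite e1.
rewrite Rintegral_itv_obnd_cbnd // e2 [RHS]big_ord_recr /=.
by [].
Qed.

Lemma Inm_formula n m (F : R -> R) : (0 < n)%N -> (0 < m)%N ->
  Inm n m F = \sum_(k < m) Pk n m F k.
Proof.
move=> n0 m0.
have mm : (m.-1 < m)%N by rewrite prednK.
have := @upto n m F m.-1 n0 mm.
rewrite prednK // divff ?pnatr_eq0 -?lt0n // => [[_ <-]].
by [].
Qed.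

End Integ.


Section Sums.
Variable R : realFieldType.

Lemma s1 N : 2 * \sum_(i < N) (i%:R : R) = N%:R * (N%:R - 1).
Proof.
elim: N => [|N IH]; first by rewrite big_ord0 mulr0 mul0r.
by rewrite big_ord_recr /= mulrDr IH -natr1; ring.
Qed.

Lemma s2 N : 6 * \sum_(i < N) (i%:R ^+ 2 : R) = N%:R * (N%:R - 1) * (2 * N%:R - 1).
Proof.
elim: N => [|N IH]; first by rewrite big_ord0 mulr0 !mul0r.
by rewrite big_ord_recr /= mulrDr IH -natr1; ring.
Qed.

Lemma dsum_lin (al be : R) m N :
  \sum_(k < m) \sum_(i < N) (al * k%:R + be * i%:R) =
  N%:R * al * (\sum_(k < m) (k%:R : R)) + m%:R * be * (\sum_(i < N) (i%:R : R)).
Proof.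
transitivity (\sum_(k < m) (N%:R * al * k%:R + be * \sum_(i < N) (i%:R : R))).
  apply: eq_bigr => k _; rewrite big_split /= sumr_const card_ord -mulr_sumr.
  by rewrite -mulr_natl; ring.
rewrite big_split /= -mulr_sumr sumr_const card_ord -mulr_natl; ring.
Qed.

Lemma dsum_sq (al be : R) m N :
  \sum_(k < m) \sum_(i < N) (al * k%:R + be * i%:R) ^+ 2 =
  N%:R * al ^+ 2 * (\sum_(k < m) (k%:R ^+ 2 : R))
  + 2 * al * be * (\sum_(k < m) (k%:R : R)) * (\sum_(i < N) (i%:R : R))
  + m%:R * be ^+ 2 * (\sum_(i < N) (i%:R ^+ 2 : R)).
Proof.
transitivity (\sum_(k < m) (N%:R * al ^+ 2 * k%:R ^+ 2 +
   (2 * al * be * (\sum_(i < N) (i%:R : R)) * k%:R +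
     be ^+ 2 * \sum_(i < N) (i%:R ^+ 2 : R)))).
  apply: eq_bigr => k _.
  transitivity (\sum_(i < N) (al ^+ 2 * k%:R ^+ 2 +
      ((2 * al * be * k%:R) * i%:R + be ^+ 2 * i%:R ^+ 2))).
    by apply: eq_bigr => i _; ring.
  rewrite !big_split /= sumr_const card_ord -!mulr_sumr -mulr_natl; ring.
rewrite !big_split /= -!mulr_sumr sumr_const card_ord -mulr_natl -mulr_natr; ring.
Qed.

End Sums.

Section Assemble.
Variable R : realType.

Definition node (n m : nat) (p : 'I_m * 'I_n.+1) : R :=
  p.1%:R / m%:R + p.2%:R * (p.1.+1%:R / m%:R - p.1%:R / m%:R) / n%:R.

Lemma pairS n m (G : 'I_m * 'I_n.+1 -> R) :
  \sum_p G p = \sum_(k < m) \sum_(i < n.+1) G (k, i).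
Proof. by rewrite pair_big /=; apply: eq_bigr => -[k i] _. Qed.

Lemma cardT n m : #|{: 'I_m * 'I_n.+1}| = (m * n.+1)%N.
Proof. by rewrite card_prod !card_ord. Qed.

Lemma hd m k : m != 0%N -> (k.+1%:R / m%:R - k%:R / m%:R : R) = m%:R^-1.
Proof. by move=> m0; rewrite -mulrBl -natr1 addrAC subrr add0r mul1r. Qed.

Lemma Inm_Ex n m (F : R -> R) : (0 < n)%N -> (0 < m)%N ->
  Inm n m F = Ex (fun p => F (node n m p)).
Proof.
move=> n0 m0; rewrite Inm_formula // /Ex pairS cardT /Pk.
rewrite mulr_suml; apply: eq_bigr => k _.
rewrite mulr_suml mulr_sumr; apply: eq_bigr => i _.
rewrite /node /= hd -?lt0n // natrM.
have mm : (m%:R : R) != 0 by rewrite pnatr_eq0 -lt0n.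
have nn : (n.+1%:R : R) != 0 by rewrite pnatr_eq0.
by rewrite invfM; ring.
Qed.

Lemma node_lin n m p : (0 < m)%N ->
  node n m p = m%:R^-1 * p.1%:R + (m%:R * n%:R)^-1 * p.2%:R.
Proof.
move=> m0; rewrite /node hd -?lt0n // invfM; ring.
Qed.

Lemma var_node n m : (0 < n)%N -> (0 < m)%N ->
  Cv (node n m) (node n m) = 12^-1 + (6 * m%:R ^+ 2 * n%:R)^-1.
Proof.
move=> n0 m0.
have mm : (m%:R : R) != 0 by rewrite pnatr_eq0 -lt0n.
have nn : (n%:R : R) != 0 by rewrite pnatr_eq0 -lt0n.
rewrite /Cv /Ex !pairS cardT.
under eq_bigr do under eq_bigr do rewrite node_lin //= -expr2.
rewrite dsum_sq.
have L : \sum_(k < m) \sum_(i < n.+1) node n m (k, i) =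
   n.+1%:R * m%:R^-1 * (\sum_(k < m) (k%:R : R)) +
   m%:R * (m%:R * n%:R)^-1 * (\sum_(i < n.+1) (i%:R : R)).
  by under eq_bigr do under eq_bigr do rewrite node_lin //=; rewrite dsum_lin.
rewrite L.
have e1 := s1 R m; have e2 := s2 R m; have e3 := s1 R n.+1; have e4 := s2 R n.+1.
set A := \sum_(k < m) (k%:R : R) in e1 *.
set B := \sum_(k < m) (k%:R ^+ 2 : R) in e2 *.
set C := \sum_(k < n.+1) (k%:R : R) in e3 *.
set D := \sum_(k < n.+1) (k%:R ^+ 2 : R) in e4 *.
have -> : A = m%:R * (m%:R - 1) / 2 by rewrite -e1; field.
have -> : B = m%:R * (m%:R - 1) * (2 * m%:R - 1) / 6 by rewrite -e2; field.
have -> : C = n.+1%:R * (n.+1%:R - 1) / 2 by rewrite -e3; field.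
have -> : D = n.+1%:R * (n.+1%:R - 1) * (2 * n.+1%:R - 1) / 6 by rewrite -e4; field.
rewrite -natr1 natrM -natr1.
have n1 : (1 + n%:R : R) != 0 by rewrite addrC natr1 pnatr_eq0.
by field; rewrite nn mm n1.
Qed.

End Assemble.
Arguments node {R}.

Section Final.
Variable R : realType.

Lemma node_in01 n m (p : 'I_m * 'I_n.+1) : (0 < n)%N -> (0 < m)%N -> node n m p \in (`[0, 1] : interval R).
Proof.
move=> n0 m0.
have mm : (m%:R : R) != 0 by rewrite pnatr_eq0 -lt0n.
have nn : (n%:R : R) != 0 by rewrite pnatr_eq0 -lt0n.
have -> : node n m p = (p.1 * n + p.2)%:R / (m * n)%:R :> R.
  by rewrite node_lin // natrD !natrM; field; rewrite nn mm.
rewrite in_itv /= divr_ge0 //= ler_pdivrMr ?ltr0n ?muln_gt0 ?m0 ?n0 // mul1r ler_nat.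
case: p => k i /=.
have hi : (i <= n)%N by rewrite -ltnS.
have hk : (k.+1 <= m)%N by [].
apply: (leq_trans (leq_add (leqnn _) hi)).
by rewrite addnC -mulSn leq_mul2r hk orbT.
Qed.

Lemma bound_f (f : R -> R) : {within `[0, 1], continuous f} ->
  exists M, forall x, x \in `[0, 1] -> `|f x| <= M.
Proof.
move=> cf.
have [c1 _ h1] := EVT_max ler01 cf.
have [c2 _ h2] := EVT_min ler01 cf.
exists (`|f c1| + `|f c2|) => x hx.
have := h1 _ hx; have := h2 _ hx.
have := ler_norm (f c1); have := ler_norm (- f c2); rewrite normrN.
have := normr_ge0 (f c1); have := normr_ge0 (f c2).
rewrite ler_norml; move=> *; apply/andP; split; lra.
Qed.

End Final.

Theorem mainTheorem7 (R : realType) (n m : nat) (f g : R -> R) :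
  (0 < n)%N -> (0 < m)%N ->
  {within `[0, 1], continuous f} -> {within `[0, 1], continuous g} ->
  `|Inm n m (f \* g) - Inm n m f * Inm n m g|
    <= 4^-1 * omega_tilde f (2 * Num.sqrt (12^-1 + (6 * m%:R ^+ 2 * n%:R)^-1))
            * omega_tilde g (2 * Num.sqrt (12^-1 + (6 * m%:R ^+ 2 * n%:R)^-1)).
Proof.
move=> n0 m0 cf cg.
have T0 : (0 < #|{: 'I_m * 'I_n.+1}|)%N by rewrite cardT muln_gt0 m0.
pose x : 'I_m * 'I_n.+1 -> R := node n m.
have hx p : x p \in `[0, 1] by exact: node_in01.
rewrite !(@Inm_Ex R n m _ n0 m0) -(@var_node R n m n0 m0).
change (`|Cv (fun p => f (x p)) (fun p => g (x p))| <=
  4^-1 * omega_tilde f (2 * Num.sqrt (Cv x x)) * omega_tilde g (2 * Num.sqrt (Cv x x))).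
set D := Num.sqrt (Cv x x).
have V0 : 0 < Cv x x.
  rewrite /x var_node //; apply: ltr_wpDr; rewrite ?invr_ge0 ?invr_gt0 //.
have D0 : 0 < D by rewrite sqrtr_gt0.
have Tt0 : 0 < 2 * D by rewrite mulr_gt0.
have Tt1 : 2 * D <= 1.
  suff : D <= 2^-1 by move=> H; rewrite -(@ler_pM2l _ 2^-1) ?invr_gt0 // mulrA mulVf // mul1r mulr1.
  apply: le_trans (ler_norm D) _; apply: sqr_le_abs; first by rewrite invr_ge0.
  rewrite sqr_sqrtr; last exact: ltW.
  rewrite /x var_node //.
  have h6 : (6 : R) <= 6 * m%:R ^+ 2 * n%:R.
    rewrite -mulrA ler_peMr // -natrX -natrM ler1n muln_gt0 expn_gt0 m0 n0 //.
  have : (6 * m%:R ^+ 2 * n%:R)^-1 <= (6 : R)^-1.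
    by rewrite lef_pV2 ?posrE // (lt_le_trans _ h6).
  move=> h; have -> : ((2 : R)^-1) ^+ 2 = 12^-1 + 6^-1 by field.
  by rewrite lerD2l.
have [Mf HMf] := @bound_f R f cf.
have [Mg HMg] := @bound_f R g cg.
have [a [l [a0 l0 HF ef]]] := @K_choice R f Mf HMf _ x (2 * D) hx Tt0 Tt1.
have [b [u [b0 u0 HG eg]]] := @K_choice R g Mg HMg _ x (2 * D) hx Tt0 Tt1.
have e2 : 2 * D / 2 = D by rewrite mulrC mulKf.
rewrite e2 in ef eg.
apply: le_trans (@cov_bound R _ T0 x _ _ a l b u a0 l0 b0 u0 HF HG) _.
by rewrite -/D ef eg; rewrite le_eqVlt; apply/orP; left; apply/eqP; field.
Qed.
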